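(* Let $N\ge3$ and $p>p_S$. For $\gamma>0$ let $y(t,\gamma):=A^{-1}e^{m\theta t}u(e^{mt},\gamma)$, $\tau(\gamma):=\frac{1}{m\theta}(\log\gamma-\log A)$ and $w(\xi,\gamma):=y(\xi-\tau(\gamma),\gamma)$. Let $\bar w$ be the solution of \[ w''+\alpha w'-w+w^p=0,\quad w>0,\quad e^{-m\theta\xi}w(\xi)\to1\ (\xi\to-\infty). \] Then for each fixed $\bar\xi\in\mathbb{R}$, $w(\cdot,\gamma)\to\bar w$ and $w'(\cdot,\gamma)\to\bar w'$ uniformly on $(-\infty,\bar\xi]$ as $\gamma\to\infty$.
   Context: $f(u):=-u+u^p$, $p_S:=\frac{N+2}{N-2}$, $\theta:=\frac{2}{p-1}$, $A:=\{\theta(N-2-\theta)\}^{1/(p-1)}$, $m:=\{\theta(N-2-\theta)\}^{-1/2}$, $\alpha:=m(N-2-2\theta)$. $u(s,\gamma)$ denotes the solution of $u''+\frac{N-1}{s}u'+f(u)=0$ ($s>0$), $u(0)=\gamma$, $u'(0)=0$, defined for all $s\ge0$. *)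

(* Defs.v *)
From Stdlib Require Import Reals Lra.
Open Scope R_scope.

(* Real power x^p for a real exponent p.  For x > 0 this is Rpower x p;
   we extend oddly (|x|^{p-1} x) to x <= 0 so that f is total.  On positive
   values (the relevant regime) this is exactly u^p. *)
Definition rpow (x p : R) : R :=
  if Rlt_dec 0 x then Rpower x p
  else if Rlt_dec x 0 then - Rpower (- x) p else 0.

Definition f (p u : R) : R := - u + rpow u p.

Definition pS (N : nat) : R := (INR N + 2) / (INR N - 2).
Definition theta (p : R) : R := 2 / (p - 1).
Definition Acst (N : nat) (p : R) : R :=
  Rpower (theta p * (INR N - 2 - theta p)) (1 / (p - 1)).
Definition mcst (N : nat) (p : R) : R :=
  / sqrt (theta p * (INR N - 2 - theta p)).
Definition alpha (N : nat) (p : R) : R :=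
  mcst N p * (INR N - 2 - 2 * theta p).

Definition is_radial_solution (N : nat) (p gamma : R) (u du : R -> R) : Prop :=
  u 0 = gamma /\
  (forall s, 0 < s -> derivable_pt_lim u s (du s)) /\
  (forall s, 0 < s ->
     derivable_pt_lim du s (- ((INR N - 1) / s) * du s - f p (u s))) /\
  (forall eps, 0 < eps -> exists delta, 0 < delta /\
     forall s, 0 < s < delta -> Rabs (u s - gamma) < eps) /\
  (forall eps, 0 < eps -> exists delta, 0 < delta /\
     forall s, 0 < s < delta -> Rabs (du s) < eps).

Definition yfun (N : nat) (p : R) (u : R -> R -> R) (t gamma : R) : R :=
  / Acst N p * exp (mcst N p * theta p * t) * u gamma (exp (mcst N p * t)).

Definition taufun (N : nat) (p gamma : R) : R :=
  (ln gamma - ln (Acst N p)) / (mcst N p * theta p).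

Definition wfun (N : nat) (p : R) (u : R -> R -> R) (xi gamma : R) : R :=
  yfun N p u (xi - taufun N p gamma) gamma.

(* Main.v *)
Require Import Defs.
From Stdlib Require Import Reals Lra Psatz FunctionalExtensionality.
Open Scope R_scope.


Lemma mono_le (h dh : R -> R) a b : a <= b ->
  (forall c, a <= c <= b -> derivable_pt_lim h c (dh c)) ->
  (forall c, a < c < b -> dh c <= 0) -> h b <= h a.
Proof.
  intros Hab Hd Hs. destruct (Req_dec a b) as [->|Hne]; [lra|].
  destruct (MVT_cor2 h dh a b ltac:(lra) Hd) as [c [Hc1 Hc2]].
  specialize (Hs c Hc2). nra.
Qed.

Lemma D_mul f g x a b : derivable_pt_lim f x a -> derivable_pt_lim g x b ->
  derivable_pt_lim (fun t => f t * g t) x (a * g x + f x * b).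
Proof. intros. exact (derivable_pt_lim_mult f g x a b H H0). Qed.

Lemma D_comp f g x a b : derivable_pt_lim f x a -> derivable_pt_lim g (f x) b ->
  derivable_pt_lim (fun t => g (f t)) x (b * a).
Proof. intros. exact (derivable_pt_lim_comp f g x a b H H0). Qed.

Lemma D_lin c x : derivable_pt_lim (fun t => c * t) x c.
Proof.
  pose proof (derivable_pt_lim_scal id c x 1 (derivable_pt_lim_id x)).
  rewrite Rmult_1_r in H. exact H.
Qed.

Lemma D_const c x : derivable_pt_lim (fun _ => c) x 0.
Proof. exact (derivable_pt_lim_const c x). Qed.

Lemma D_plus f g x a b : derivable_pt_lim f x a -> derivable_pt_lim g x b ->
  derivable_pt_lim (fun t => f t + g t) x (a + b).
Proof. intros. exact (derivable_pt_lim_plus f g x a b H H0). Qed.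

Lemma D_minus f g x a b : derivable_pt_lim f x a -> derivable_pt_lim g x b ->
  derivable_pt_lim (fun t => f t - g t) x (a - b).
Proof. intros. exact (derivable_pt_lim_minus f g x a b H H0). Qed.

Lemma D_expl c x : derivable_pt_lim (fun t => exp (c * t)) x (c * exp (c * x)).
Proof.
  pose proof (D_comp (fun t => c*t) exp x c (exp (c*x)) (D_lin c x) (derivable_pt_lim_exp _)).
  simpl in H. rewrite Rmult_comm. exact H.
Qed.

Lemma D_ext f g x l : (forall t, f t = g t) -> derivable_pt_lim f x l -> derivable_pt_lim g x l.
Proof.
  intros E H. intros e He. destruct (H e He) as [d Hd]. exists d. intros h Hh0 Hh.
  rewrite <- !E. apply Hd; auto.
Qed.

Lemma D_cont f x l : derivable_pt_lim f x l -> forall e, 0 < e -> exists d, 0 < d /\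
  forall y, Rabs (y - x) < d -> Rabs (f y - f x) < e.
Proof.
  intros H e He.
  assert (C : continuity_pt f x) by (apply derivable_continuous_pt; exists l; exact H).
  destruct (C e He) as [d [Hd Hd']]. exists d; split; auto. intros y Hy.
  destruct (Req_dec y x) as [->|Hne]. rewrite Rminus_diag, Rabs_R0; auto.
  apply (Hd' y). split. split. exact I. auto. exact Hy.
Qed.

Lemma exp_le_mono x y : x <= y -> exp x <= exp y.
Proof. intros [h|h]. left; apply exp_increasing; auto. right; rewrite h; auto. Qed.

Lemma Rdiv_le_0_compat a b : 0 <= a -> 0 < b -> 0 <= a / b.
Proof. intros. unfold Rdiv. apply Rmult_le_pos; auto. left; apply Rinv_0_lt_compat; auto. Qed.

Lemma D_full f g x l l' : derivable_pt_lim f x l -> (forall t, f t = g t) -> l = l' ->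
  derivable_pt_lim g x l'.
Proof. intros H E ->. eapply D_ext; eauto. Qed.

Lemma D_expexp c k x : derivable_pt_lim (fun t => exp (c * exp (k * t))) x
   (exp (c * exp (k * x)) * (c * (k * exp (k * x)))).
Proof.
  pose proof (D_comp (fun t => c * exp (k*t)) exp x (c * (k * exp (k*x))) (exp (c * exp (k * x)))).
  apply H; [|apply derivable_pt_lim_exp].
  pose proof (D_mul (fun _ => c) (fun t => exp (k*t)) x 0 (k * exp (k*x)) (D_const c x) (D_expl k x)).
  simpl in H0. replace (c * (k * exp (k * x))) with (0 * exp (k * x) + c * (k * exp (k * x))) by ring.
  exact H0.
Qed.

Section Boot.
Variables (V dV : R -> R) (k K C D b : R).
Hypotheses (Hk : 0 < k) (HK : 0 < K) (HC : 0 <= C)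
  (HV : forall x, derivable_pt_lim V x (dV x))
  (Hd : forall x, x <= b -> V x < D -> dV x <= exp (k*x) * (K * V x + C))
  (Hlim : forall e, 0 < e -> exists M, forall x, x < M -> Rabs (V x) < e)
  (Hsm : C / K * exp (K / k * exp (k*b)) < D).

Let W t := exp (- (K/k) * exp (k*t)) * (V t + C/K).
Let dW t := exp (- (K/k) * exp (k*t)) * (dV t - exp (k*t) * (K * V t + C)).

Lemma W_der x : derivable_pt_lim W x (dW x).
Proof.
  unfold W, dW.
  pose proof (D_mul (fun t => exp (- (K/k) * exp (k*t))) (fun t => V t + C/K) x _ _
    (D_expexp (-(K/k)) k x) (D_plus V (fun _ => C/K) x _ _ (HV x) (D_const _ x))).
  simpl in H. match goal with |- derivable_pt_lim _ _ ?l => replace l with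
    (exp (- (K / k) * exp (k * x)) * (- (K / k) * (k * exp (k * x))) * (V x + C / K) +
       exp (- (K / k) * exp (k * x)) * (dV x + 0)) end. exact H.
  field. lra.
Qed.

Lemma step1 x : x <= b -> (forall y, y < x -> V y < D) ->
  V x <= C / K * exp (K / k * exp (k*b)).
Proof.
  intros Hxb Hy.
  assert (Ha : forall a, a < x -> W x <= Rabs (V a) + C / K).
  { intros a Hax.
    assert (W x <= W a).
    { apply (mono_le W dW a x); [lra| intros; apply W_der |].
      intros c Hc. unfold dW.
      assert (dV c <= exp (k*c) * (K * V c + C)) by (apply Hd; [lra| apply Hy; lra]).
      pose proof (exp_pos (- (K / k) * exp (k * c))). nra. }
    assert (W a <= Rabs (V a) + C / K).
    { unfold W. assert (0 < exp (- (K / k) * exp (k * a)) <= 1).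
      { split. apply exp_pos. rewrite <- exp_0. apply exp_le_mono.
        assert (0 < K/k) by (apply Rdiv_lt_0_compat; lra). pose proof (exp_pos (k*a)). nra. }
      pose proof (Rle_abs (V a)). assert (0 <= C / K) by (apply Rdiv_le_0_compat; lra).
      pose proof (Rabs_pos (V a)).
      set (e := exp (- (K / k) * exp (k * a))) in *. set (c := C/K) in *.
      set (v := V a) in *. set (av := Rabs v) in *. nra. }
    lra. }
  assert (HW : W x <= C / K).
  { destruct (Rle_dec (W x) (C/K)) as [h|h]; auto. exfalso.
    destruct (Hlim (W x - C/K)) as [M HM]; [lra|].
    set (a := Rmin M x - 1).
    assert (a < M) by (unfold a; pose proof (Rmin_l M x); lra).
    assert (a < x) by (unfold a; pose proof (Rmin_r M x); lra).
    specialize (HM a H). specialize (Ha a H0). lra. }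
  unfold W in HW.
  assert (E : V x = exp (- (K / k) * exp (k * x)) * (V x + C / K) * exp (K/k * exp (k*x)) - C/K).
  { rewrite Rmult_comm, <- Rmult_assoc, <- exp_plus.
    replace (K / k * exp (k * x) + - (K / k) * exp (k * x)) with 0 by ring. rewrite exp_0. ring. }
  rewrite E.
  assert (exp (K / k * exp (k * x)) <= exp (K / k * exp (k * b))).
  { apply exp_le_mono. assert (0 < K/k) by (apply Rdiv_lt_0_compat; lra).
    assert (exp (k*x) <= exp (k*b)) by (apply exp_le_mono; nra). nra. }
  assert (0 <= C / K) by (apply Rdiv_le_0_compat; lra).
  pose proof (exp_pos (K / k * exp (k * x))).
  set (w := exp (- (K / k) * exp (k * x)) * (V x + C / K)) in *.
  set (E1 := exp (K / k * exp (k * x))) in *. set (E2 := exp (K / k * exp (k * b))) in *.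
  set (c := C/K) in *. nra.
Qed.

Lemma boot : forall x, x <= b -> V x <= C / K * exp (K / k * exp (k*b)).
Proof.
  set (C0 := C / K * exp (K / k * exp (k*b))) in *.
  assert (HC0 : 0 <= C0).
  { unfold C0. assert (0 <= C / K) by (apply Rdiv_le_0_compat; lra).
    pose proof (exp_pos (K / k * exp (k * b))). nra. }
  assert (Hall : forall x, x <= b -> V x < D).
  { intros x1 Hx1. destruct (Rlt_dec (V x1) D) as [h|h]; auto. exfalso.
    set (T := fun t => t <= x1 /\ forall y, y <= t -> V y < D).
    assert (Tb : bound T) by (exists x1; intros t [Ht _]; auto).
    destruct (Hlim D) as [M HM]; [lra|].
    assert (Tn : exists t, T t).
    { exists (Rmin M x1 - 1). split. pose proof (Rmin_r M x1); lra.
      intros y Hy. pose proof (Rmin_l M x1). pose proof (HM y ltac:(lra)).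
      pose proof (Rle_abs (V y)). lra. }
    destruct (completeness T Tb Tn) as [s [Hs1 Hs2]].
    assert (Hsx : s <= x1) by (apply Hs2; intros t [Ht _]; auto).
    assert (Hbel : forall y, y < s -> V y < D).
    { intros y Hy. destruct (Classical_Prop.classic (exists t, T t /\ y < t)) as [[t [[_ Ht] Hyt]]|hn].
      apply Ht; lra. exfalso.
      assert (s <= y). { apply Hs2. intros t Ht. destruct (Rle_dec t y); auto.
        exfalso; apply hn; exists t; split; auto; lra. }
      lra. }
    assert (Vs : V s <= C0) by (apply step1; auto; lra).
    destruct (D_cont V s (dV s) (HV s) (D - V s)) as [d [Hd0 Hd1]]; [lra|].
    destruct (Req_dec s x1) as [->|Hne]; [lra|].
    set (t' := Rmin (s + d/2) x1).
    assert (T t').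
    { split. apply Rmin_r. intros y Hy.
      destruct (Rlt_dec y s) as [hy|hy]. apply Hbel; auto.
      assert (t' <= s + d/2) by apply Rmin_l.
      assert (Hys : Rabs (y - s) < d) by (apply Rabs_def1; lra).
      specialize (Hd1 y Hys). pose proof (Rle_abs (V y - V s)). lra. }
    pose proof (Hs1 t' H).
    assert (s < t'). { unfold t'. apply Rmin_glb_lt; lra. }
    lra. }
  intros x Hx. apply step1; auto. intros y Hy. apply Hall; lra.
Qed.
End Boot.

Section Decay.
Variables (P dP ddP : R -> R) (be k B x0 Bnd M0 : R).
Hypotheses (Hbe : 0 < be) (Hk : 0 < k) (HB : 0 <= B)
  (HP : forall x, derivable_pt_lim P x (dP x))
  (HdP : forall x, derivable_pt_lim dP x (ddP x))
  (Hq : forall x, x <= x0 -> Rabs (ddP x + be * dP x) <= B * exp (k * x))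
  (Hbd : forall x, x < M0 -> Rabs (P x) <= Bnd).

Let ka := be + k.
Let q x := exp (be * x) * dP x.
Let dq x := exp (be * x) * (ddP x + be * dP x).
Let Rb b := B / ka * exp (ka * b).

Lemma q_der x : derivable_pt_lim q x (dq x).
Proof.
  unfold q, dq. pose proof (D_mul _ _ x _ _ (D_expl be x) (HdP x)).
  match goal with |- derivable_pt_lim _ _ ?l => replace l with
    (be * exp (be * x) * dP x + exp (be * x) * ddP x) by ring end. exact H.
Qed.

Lemma dq_bound x : x <= x0 -> Rabs (dq x) <= B * exp (ka * x).
Proof.
  intros Hx. unfold dq, ka. rewrite Rabs_mult, (Rabs_right (exp _)) by (left; apply exp_pos).
  replace ((be + k) * x) with (be * x + k * x) by ring. rewrite exp_plus.
  pose proof (Hq x Hx). pose proof (exp_pos (be*x)). nra.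
Qed.

Lemma q_close a b : a <= b -> b <= x0 -> q b - Rb b <= q a /\ q a <= q b + Rb b.
Proof.
  intros Hab Hb.
  assert (Hka : 0 < ka) by (unfold ka; lra).
  assert (HR : forall t, 0 <= Rb t).
  { intros t; unfold Rb. apply Rmult_le_pos. apply Rdiv_le_0_compat; lra. left; apply exp_pos. }
  split.
  - pose proof (mono_le (fun t => q t - B / ka * exp (ka * t))
      (fun t => dq t - B / ka * (ka * exp (ka * t))) a b Hab) as M.
    assert (q b - B / ka * exp (ka * b) <= q a - B / ka * exp (ka * a)).
    { apply M.
      - intros c _. apply D_minus. apply q_der.
        pose proof (D_mul (fun _ => B/ka) (fun t => exp (ka*t)) c _ _ (D_const _ c) (D_expl ka c)).
        simpl in H. replace (B / ka * (ka * exp (ka * c))) with (0 * exp (ka * c) + B / ka * (ka * exp (ka * c))) by ring.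
        exact H.
      - intros c Hc. pose proof (dq_bound c ltac:(lra)). pose proof (Rle_abs (dq c)).
        replace (B / ka * (ka * exp (ka * c))) with (B * exp (ka * c)) by (field; lra). lra. }
    pose proof (HR a). unfold Rb in *. lra.
  - pose proof (mono_le (fun t => - q t - B / ka * exp (ka * t))
      (fun t => - dq t - B / ka * (ka * exp (ka * t))) a b Hab) as M.
    assert (- q b - B / ka * exp (ka * b) <= - q a - B / ka * exp (ka * a)).
    { apply M.
      - intros c _. apply D_minus.
        pose proof (D_minus (fun _ => 0) q c _ _ (D_const 0 c) (q_der c)). simpl in H.
        replace (- dq c) with (0 - dq c) by ring. apply (D_ext (fun t => 0 - q t)). intros; ring. exact H.
        pose proof (D_mul (fun _ => B/ka) (fun t => exp (ka*t)) c _ _ (D_const _ c) (D_expl ka c)).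
        simpl in H. replace (B / ka * (ka * exp (ka * c))) with (0 * exp (ka * c) + B / ka * (ka * exp (ka * c))) by ring.
        exact H.
      - intros c Hc. pose proof (dq_bound c ltac:(lra)). pose proof (Rle_abs (- dq c)).
        rewrite Rabs_Ropp in H0.
        replace (B / ka * (ka * exp (ka * c))) with (B * exp (ka * c)) by (field; lra). lra. }
    pose proof (HR a). unfold Rb in *. lra.
Qed.

Lemma one_sided b : b <= x0 -> b < M0 -> q b <= 2 * Rb b.
Proof.
  intros Hb0 HbM. destruct (Rle_dec (q b) (2 * Rb b)) as [h|h]; auto. exfalso.
  assert (HR : 0 <= Rb b).
  { unfold Rb. apply Rmult_le_pos. apply Rdiv_le_0_compat; unfold ka; lra. left; apply exp_pos. }
  set (k1 := q b / 2).
  assert (Hk1 : 0 < k1) by (unfold k1; lra).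
  assert (Hd : forall a, a <= b -> k1 * exp (- be * a) <= dP a).
  { intros a Ha. destruct (q_close a b Ha Hb0) as [H1 _].
    assert (k1 <= q a) by (unfold k1; lra). unfold q in H.
    assert (E1 : exp (- be * a) * exp (be * a) = 1).
    { rewrite <- exp_plus. replace (- be * a + be * a) with 0 by ring. apply exp_0. }
    pose proof (exp_pos (- be * a)) as E2.
    set (u := exp (- be * a)) in *. set (v := exp (be * a)) in *.
    assert (E3 : u * k1 <= u * (v * dP a)) by (apply Rmult_le_compat_l; lra).
    replace (u * (v * dP a)) with ((u * v) * dP a) in E3 by ring. rewrite E1 in E3. lra. }
  assert (Hh : forall a, a <= b -> P a + k1 / be * exp (- be * a) <= P b + k1 / be * exp (- be * b)).
  { intros a Ha.
    pose proof (mono_le (fun t => - (P t + k1 / be * exp (- be * t)))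
       (fun t => - (dP t + k1 / be * (- be * exp (- be * t)))) a b Ha) as M.
    assert (- (P b + k1 / be * exp (- be * b)) <= - (P a + k1 / be * exp (- be * a))).
    { apply M.
      - intros c _.
        pose proof (D_mul (fun _ => k1/be) (fun t => exp (- be*t)) c _ _ (D_const _ c) (D_expl (- be) c)).
        simpl in H.
        pose proof (D_plus _ _ c _ _ (HP c) H).
        pose proof (D_minus (fun _ => 0) _ c _ _ (D_const 0 c) H0). simpl in H1.
        eapply D_full; [exact H1| intros t; simpl; ring | ring].
      - intros c Hc. pose proof (Hd c ltac:(lra)).
        replace (k1 / be * (- be * exp (- be * c))) with (- (k1 * exp (- be * c))) by (field; lra).
        lra. }
    lra. }
  set (Y := be * (Rabs (P b) + Rabs Bnd + 1) / k1 + exp (- be * b) + 1).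
  assert (HY : 0 < Y).
  { unfold Y. assert (0 <= be * (Rabs (P b) + Rabs Bnd + 1) / k1).
    { apply Rdiv_le_0_compat; auto. pose proof (Rabs_pos (P b)). pose proof (Rabs_pos Bnd). nra. }
    pose proof (exp_pos (- be * b)). lra. }
  set (a := Rmin (b - 1) (- ln Y / be)).
  assert (Ha1 : a <= b - 1) by apply Rmin_l.
  assert (Ha2 : a <= - ln Y / be) by apply Rmin_r.
  assert (HeY : Y <= exp (- be * a)).
  { rewrite <- (exp_ln Y HY). apply exp_le_mono.
    assert (be * a <= - ln Y). { replace (- ln Y) with (be * (- ln Y / be)) by (field; lra). nra. }
    lra. }
  specialize (Hh a ltac:(lra)).
  specialize (Hbd a ltac:(lra)).
  assert (k1 / be * Y <= k1 / be * exp (- be * a)).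
  { apply Rmult_le_compat_l; auto. apply Rdiv_le_0_compat; lra. }
  assert (k1 / be * Y = (Rabs (P b) + Rabs Bnd + 1) + k1/be * exp (- be * b) + k1/be).
  { unfold Y. field. lra. }
  assert (0 < k1/be) by (apply Rdiv_lt_0_compat; lra).
  pose proof (Rle_abs (P b)). pose proof (Rle_abs Bnd). pose proof (Rle_abs (P a)).
  pose proof (Rabs_pos (P a)). 
  assert (- Bnd <= P a). { pose proof (Rabs_Ropp (P a)). pose proof (Rle_abs (- P a)). lra. }
  lra.
Qed.

End Decay.

Lemma decay (P dP ddP : R -> R) (be k B x0 Bnd M0 : R) :
  0 < be -> 0 < k -> 0 <= B ->
  (forall x, derivable_pt_lim P x (dP x)) ->
  (forall x, derivable_pt_lim dP x (ddP x)) ->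
  (forall x, x <= x0 -> Rabs (ddP x + be * dP x) <= B * exp (k * x)) ->
  (forall x, x < M0 -> Rabs (P x) <= Bnd) ->
  forall b, b <= x0 -> b < M0 -> Rabs (dP b) <= 2 * (B / (be + k)) * exp (k * b).
Proof.
  intros Hbe Hk HB HP HdP Hq Hbd b Hb1 Hb2.
  pose proof (one_sided P dP ddP be k B x0 Bnd M0 Hbe Hk HB HP HdP Hq Hbd b Hb1 Hb2) as H1.
  pose proof (one_sided (fun x => - P x) (fun x => - dP x) (fun x => - ddP x) be k B x0 Bnd M0 Hbe Hk HB)
    as H2.
  simpl in H1, H2.
  assert (H3 : exp (be * b) * - dP b <= 2 * (B / (be + k) * exp ((be + k) * b))).
  { apply H2; auto.
    - intros x. eapply D_full. apply (D_minus (fun _ => 0) P x _ _ (D_const 0 x) (HP x)).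
      intros; simpl; ring. ring.
    - intros x. eapply D_full. apply (D_minus (fun _ => 0) dP x _ _ (D_const 0 x) (HdP x)).
      intros; simpl; ring. ring.
    - intros x Hx. replace (- ddP x + be * - dP x) with (- (ddP x + be * dP x)) by ring.
      rewrite Rabs_Ropp. auto.
    - intros x Hx. rewrite Rabs_Ropp. auto. }
  replace ((be + k) * b) with (be * b + k * b) in H1, H3 by ring.
  rewrite exp_plus in H1, H3.
  pose proof (exp_pos (be * b)). pose proof (exp_pos (k*b)).
  set (e1 := exp (be * b)) in *. set (e2 := exp (k * b)) in *. set (c := B / (be + k)) in *.
  apply Rabs_le. split.
  - assert (e1 * (- dP b) <= e1 * (2 * c * e2)) by lra.
    apply Rmult_le_reg_l in H4; auto. lra.
  - assert (e1 * (dP b) <= e1 * (2 * c * e2)) by lra.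
    apply Rmult_le_reg_l in H4; auto.
Qed.

Lemma rpow_lip_aux lo hi p x y : 0 < lo -> 1 <= p -> lo <= x -> x < y -> y <= hi ->
  Rabs (Rpower y p - Rpower x p) <= p * Rpower hi (p-1) * (y - x).
Proof.
  intros Hlo Hp Hx Hxy Hy.
  destruct (MVT_cor2 (fun t => Rpower t p) (fun t => p * Rpower t (p-1)) x y Hxy) as [c [Hc1 Hc2]].
  { intros c Hc. apply derivable_pt_lim_power. lra. }
  rewrite Hc1.
  assert (Rpower c (p-1) <= Rpower hi (p-1)) by (apply Rle_Rpower_l; lra).
  assert (0 < Rpower c (p-1)) by (unfold Rpower; apply exp_pos).
  set (r1 := Rpower c (p-1)) in *. set (r2 := Rpower hi (p-1)) in *.
  assert (0 <= p * r1 * (y - x)) by (apply Rmult_le_pos; [apply Rmult_le_pos|]; lra).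
  rewrite Rabs_right by lra.
  apply Rmult_le_compat_r; [lra|]. apply Rmult_le_compat_l; lra.
Qed.

Lemma rpow_lip lo hi p x y : 0 < lo -> 1 <= p -> lo <= x <= hi -> lo <= y <= hi ->
  Rabs (Rpower x p - Rpower y p) <= p * Rpower hi (p-1) * Rabs (x - y).
Proof.
  intros Hlo Hp Hx Hy. destruct (Rtotal_order x y) as [h|[h|h]].
  - rewrite <- Rabs_Ropp. replace (- (Rpower x p - Rpower y p)) with (Rpower y p - Rpower x p) by ring.
    rewrite (Rabs_left (x - y)) by lra. replace (- (x - y)) with (y - x) by ring.
    apply (rpow_lip_aux lo); lra.
  - subst. rewrite !Rminus_diag, Rabs_R0. lra.
  - rewrite (Rabs_right (x - y)) by lra. apply (rpow_lip_aux lo); lra.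
Qed.

Lemma alg_ineq E X ex L Dg c gg : 0 < ex -> 0 <= L -> 0 <= gg -> 0 <= c ->
  Rabs Dg <= L * Rabs E + c ->
  2*ex*E*X - 2*gg*X*X - 2*ex*X*Dg <= ex * ((2+L)*(E*E + X*X) + c*c).
Proof.
  intros Hex HL Hg Hc HD.
  assert (h1 : E * X <= Rabs E * Rabs X).
  { rewrite <- Rabs_mult. apply Rle_abs. }
  assert (h2 : - (X * Dg) <= Rabs X * Rabs Dg).
  { rewrite <- Rabs_mult, <- Rabs_Ropp. apply Rle_abs. }
  assert (EE : Rabs E * Rabs E = E * E) by (rewrite <- Rabs_mult; apply Rabs_right; nra).
  assert (XX : Rabs X * Rabs X = X * X) by (rewrite <- Rabs_mult; apply Rabs_right; nra).
  pose proof (Rabs_pos E). pose proof (Rabs_pos X). pose proof (Rabs_pos Dg).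
  set (e := Rabs E) in *. set (a := Rabs X) in *. set (d := Rabs Dg) in *.
  assert (h3 : a * d <= a * (L * e + c)) by (apply Rmult_le_compat_l; auto).
  assert (h4 : 2 * (E * X) - 2 * (X * Dg) <= (2 + L) * (E*E + X*X) + c*c).
  { rewrite <- EE, <- XX.
    assert (2*e*a <= e*e + a*a) by (assert (0 <= (e-a)*(e-a)) by apply Rle_0_sqr; lra).
    assert (2*a*L*e <= L*(e*e + a*a)) by (assert (0 <= L*((e-a)*(e-a))) by (apply Rmult_le_pos; [lra|apply Rle_0_sqr]); lra).
    assert (2*a*c <= a*a + c*c) by (assert (0 <= (a-c)*(a-c)) by apply Rle_0_sqr; lra).
    assert (0 <= e * e) by apply Rle_0_sqr. lra. }
  assert (h5 : 0 <= gg * (X * X)) by (apply Rmult_le_pos; nra).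
  assert (h6 : ex * (2 * (E * X) - 2 * (X * Dg)) <= ex * ((2 + L) * (E*E + X*X) + c*c)).
  { apply Rmult_le_compat_l; lra. }
  nra.
Qed.

Definition lim0 (f : R -> R) := forall e, 0 < e -> exists M, forall x, x < M -> Rabs (f x) < e.

Lemma lim0_ext f g : (forall x, f x = g x) -> lim0 f -> lim0 g.
Proof. intros E H e He. destruct (H e He) as [M HM]. exists M. intros. rewrite <- E. auto. Qed.

Lemma lim0_minus f g : lim0 f -> lim0 g -> lim0 (fun x => f x - g x).
Proof.
  intros Hf Hg e He. destruct (Hf (e/2)) as [M1 H1]; [lra|]. destruct (Hg (e/2)) as [M2 H2]; [lra|].
  exists (Rmin M1 M2). intros x Hx.
  pose proof (Rmin_l M1 M2). pose proof (Rmin_r M1 M2).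
  specialize (H1 x ltac:(lra)). specialize (H2 x ltac:(lra)).
  pose proof (Rabs_triang (f x) (- g x)). rewrite Rabs_Ropp in H3. unfold Rminus. lra.
Qed.

Lemma lim0_sq f g : lim0 f -> lim0 g -> lim0 (fun x => f x * f x + g x * g x).
Proof.
  intros Hf Hg e He. set (r := Rmin 1 (e/3)).
  assert (Hr : 0 < r) by (apply Rmin_glb_lt; lra).
  assert (Hr1 : r <= 1) by apply Rmin_l. assert (Hr2 : r <= e/3) by apply Rmin_r.
  destruct (Hf r Hr) as [M1 H1]. destruct (Hg r Hr) as [M2 H2].
  exists (Rmin M1 M2). intros x Hx.
  pose proof (Rmin_l M1 M2). pose proof (Rmin_r M1 M2).
  specialize (H1 x ltac:(lra)). specialize (H2 x ltac:(lra)).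
  assert (f x * f x < r * r).
  { rewrite <- (Rabs_right (f x * f x)) by (apply Rle_ge, Rle_0_sqr).
    rewrite Rabs_mult. pose proof (Rabs_pos (f x)). apply Rmult_le_0_lt_compat; auto. }
  assert (g x * g x < r * r).
  { rewrite <- (Rabs_right (g x * g x)) by (apply Rle_ge, Rle_0_sqr).
    rewrite Rabs_mult. pose proof (Rabs_pos (g x)). apply Rmult_le_0_lt_compat; auto. }
  pose proof (Rle_0_sqr (f x)). pose proof (Rle_0_sqr (g x)). unfold Rsqr in *.
  rewrite Rabs_right by lra. nra.
Qed.


Section Consts.
Variables (N : nat) (p : R).
Hypotheses (HN : (3 <= N)%nat) (Hp : pS N < p).

Lemma INR_N3 : 3 <= INR N.
Proof. replace 3 with (INR 3) by (simpl; ring). apply le_INR; auto. Qed.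

Lemma p_gt : 1 < p /\ 2 / (p - 1) < (INR N - 2) / 2.
Proof.
  pose proof INR_N3. unfold pS in Hp.
  assert (h : (INR N + 2) / (INR N - 2) > 1).
  { apply (Rmult_lt_reg_r (INR N - 2)); [lra|]. unfold Rdiv. rewrite Rmult_assoc, Rinv_l by lra. lra. }
  assert (Hp1 : 1 < p) by lra. split; auto.
  assert (p * (INR N - 2) > INR N + 2).
  { apply (Rmult_lt_reg_r (/ (INR N - 2))). apply Rinv_0_lt_compat; lra.
    rewrite Rmult_assoc, Rinv_r by lra. unfold Rdiv in Hp. lra. }
  apply (Rmult_lt_reg_r ((p-1)*2)). nra.
  unfold Rdiv. replace (2 * / (p - 1) * ((p - 1) * 2)) with 4 by (field; lra).
  replace ((INR N - 2) * / 2 * ((p - 1) * 2)) with ((INR N - 2) * (p - 1)) by (field; lra). nra.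
Qed.

Lemma th_pos : 0 < theta p.
Proof. destruct p_gt. unfold theta. apply Rdiv_lt_0_compat; lra. Qed.

Lemma th_small : theta p < (INR N - 2) / 2.
Proof. destruct p_gt. unfold theta. auto. Qed.

Lemma th_p : (p - 1) * theta p = 2.
Proof. destruct p_gt. unfold theta. field. lra. Qed.

Definition Qc := theta p * (INR N - 2 - theta p).

Lemma Q_pos : 0 < Qc.
Proof. pose proof th_pos; pose proof th_small; pose proof INR_N3. unfold Qc. nra. Qed.

Lemma m_pos : 0 < mcst N p.
Proof. unfold mcst. apply Rinv_0_lt_compat. apply sqrt_lt_R0. apply Q_pos. Qed.

Lemma mmQ : mcst N p * mcst N p * Qc = 1.
Proof.
  pose proof Q_pos. unfold mcst. fold Qc.
  rewrite <- Rinv_mult. rewrite sqrt_sqrt by lra. field. lra.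
Qed.

Lemma A_pos : 0 < Acst N p.
Proof. unfold Acst. unfold Rpower. apply exp_pos. Qed.

Lemma lnA : ln (Acst N p) = ln Qc / (p - 1).
Proof. destruct p_gt. unfold Acst. rewrite ln_Rpower. fold Qc. field. lra. Qed.

Lemma alpha_id : let m := mcst N p in let th := theta p in
  m * th * (m * th) + alpha N p * (m * th) = 1.
Proof.
  simpl. pose proof mmQ. unfold Qc in H. unfold alpha. nra.
Qed.

End Consts.


Definition kap N p g := exp (- (mcst N p * taufun N p g)).

Section Zsec.
Variables (N : nat) (p : R).
Hypotheses (HN : (3 <= N)%nat) (Hp : pS N < p).
Variables (g : R) (ug dug : R -> R).
Hypothesis (Hg : 0 < g) (Hsol : is_radial_solution N p g ug dug).

Let m := mcst N p.
Let th := theta p.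
Let k := kap N p g.
Let be := m * (INR N - 2).

Lemma mth_pos : 0 < m * th.
Proof. pose proof (m_pos N p HN Hp). pose proof (th_pos N p HN Hp). unfold m, th. nra. Qed.

Lemma k_pos : 0 < k.
Proof. apply exp_pos. Qed.

Lemma wfun_eq u x : u g = ug ->
  wfun N p u x g = exp (m * th * x) * (ug (k * exp (m * x)) / g).
Proof.
  intros Hu. unfold wfun, yfun. rewrite Hu. fold m th.
  pose proof mth_pos as H0. pose proof (A_pos N p) as HA.
  assert (E1 : exp (m * (x - taufun N p g)) = k * exp (m * x)).
  { unfold k, kap. fold m. rewrite <- exp_plus. f_equal. ring. }
  rewrite E1.
  assert (E2 : exp (m * th * (x - taufun N p g)) = exp (m * th * x) * (Acst N p / g)).
  { replace (m * th * (x - taufun N p g)) with (m * th * x + - (ln g - ln (Acst N p))).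
    rewrite exp_plus. f_equal.
    replace (- (ln g - ln (Acst N p))) with (ln (Acst N p) + - ln g) by ring.
    rewrite exp_plus, exp_Ropp, exp_ln, exp_ln; auto.
    unfold taufun. fold m th. pose proof (m_pos N p HN Hp). pose proof (th_pos N p HN Hp).
    fold m th in H, H1. field. split; lra. }
  rewrite E2. field. lra.
Qed.

Lemma kap_id : m * m * (k * k) * Rpower g p / g = 1.
Proof.
  pose proof (mmQ N p HN Hp) as HQ. pose proof (Q_pos N p HN Hp) as HQp.
  pose proof (th_p N p HN Hp) as Hth. pose proof mth_pos. pose proof (th_pos N p HN Hp).
  destruct (p_gt N p HN Hp).
  assert (E : k * k * Rpower g p / g = exp (- (m * taufun N p g) + - (m * taufun N p g) + p * ln g + - ln g)).
  { rewrite !exp_plus, (exp_Ropp (ln g)), exp_ln by auto. unfold k, kap, Rpower. fold m.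
    field. lra. }
  assert (E2 : - (m * taufun N p g) + - (m * taufun N p g) + p * ln g + - ln g = ln (Qc N p)).
  { assert (Hmt : m * taufun N p g = ((p-1) * ln g - ln (Qc N p)) / 2).
    { unfold taufun. fold m th. rewrite (lnA N p HN Hp).
      pose proof (m_pos N p HN Hp). fold m in H3. unfold th, theta. field. repeat split; lra. }
    rewrite Hmt. field. }
  rewrite E2, exp_ln in E by auto.
  unfold m in *. rewrite <- HQ. rewrite <- E. field. lra.
Qed.


Lemma s_der x : derivable_pt_lim (fun t => k * exp (m * t)) x (k * (m * exp (m * x))).
Proof.
  eapply D_full. apply (D_mul (fun _ => k) (fun t => exp (m*t)) x _ _ (D_const k x) (D_expl m x)).
  intros; reflexivity. ring.
Qed.

Lemma s_pos x : 0 < k * exp (m * x).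
Proof. pose proof k_pos. pose proof (exp_pos (m*x)). nra. Qed.

Lemma z_der x : derivable_pt_lim (fun t => ug (k * exp (m * t)) / g) x
   (m * k * exp (m * x) * dug (k * exp (m * x)) / g).
Proof.
  destruct Hsol as [H0 [Hd1 [Hd2 [Hl1 Hl2]]]].
  pose proof (D_comp _ ug x _ _ (s_der x) (Hd1 _ (s_pos x))).
  eapply D_full. apply (D_mul _ (fun _ => / g) x _ _ H (D_const _ x)).
  intros; simpl; unfold Rdiv; reflexivity. simpl. field. lra.
Qed.

Lemma dz_der x : derivable_pt_lim (fun t => m * k * exp (m * t) * dug (k * exp (m * t)) / g) x
   (- be * (m * k * exp (m * x) * dug (k * exp (m * x)) / g)
    - m * m * (k * exp (m * x)) * (k * exp (m * x)) * Defs.f p (ug (k * exp (m * x))) / g).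
Proof.
  destruct Hsol as [H0 [Hd1 [Hd2 [Hl1 Hl2]]]].
  pose proof (D_comp _ dug x _ _ (s_der x) (Hd2 _ (s_pos x))).
  pose proof (D_mul (fun _ => m * k / g) (fun t => exp (m*t)) x _ _ (D_const _ x) (D_expl m x)).
  pose proof (D_mul _ _ x _ _ H1 H).
  eapply D_full. exact H2. intros; simpl; field; lra.
  simpl. pose proof k_pos. pose proof (exp_pos (m*x)). unfold be. field. repeat split; lra.
Qed.

Lemma ddz_pos x : 0 < ug (k * exp (m * x)) ->
  m * m * (k * exp (m * x)) * (k * exp (m * x)) * Defs.f p (ug (k * exp (m * x))) / g
  = exp (2 * m * x) * (Rpower (ug (k * exp (m * x)) / g) p
        - m * m * (k * k) * (ug (k * exp (m * x)) / g)).
Proof.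
  intros Hu. unfold Defs.f, rpow. destruct (Rlt_dec 0 (ug (k * exp (m * x)))) as [_|h]; [|lra].
  pose proof kap_id as KI.
  set (v := ug (k * exp (m * x))) in *.
  assert (Rpower v p = Rpower g p * Rpower (v / g) p).
  { rewrite Rpower_mult_distr; auto. f_equal. field. lra. apply Rdiv_lt_0_compat; lra. }
  rewrite H.
  replace (exp (2 * m * x)) with (exp (m * x) * exp (m * x)) by (rewrite <- exp_plus; f_equal; ring).
  replace (m * m * (k * exp (m * x)) * (k * exp (m * x)) * (- v + Rpower g p * Rpower (v / g) p) / g)
    with (exp (m * x) * exp (m * x) * ((m * m * (k * k) * Rpower g p / g) * Rpower (v / g) p
          - m * m * (k * k) * (v / g))) by (field; lra).
  rewrite KI. ring.
Qed.

End Zsec.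


Section Psec.
Variables (N : nat) (p : R).
Hypotheses (HN : (3 <= N)%nat) (Hp : pS N < p).
Variables (wbar dwbar : R -> R).
Hypotheses (Hw1 : forall xi, derivable_pt_lim wbar xi (dwbar xi))
  (Hw2 : forall xi, derivable_pt_lim dwbar xi
                (- alpha N p * dwbar xi + wbar xi - rpow (wbar xi) p)).

Let m := mcst N p.
Let th := theta p.
Let be := m * (INR N - 2).

Lemma em_der x : derivable_pt_lim (fun t => exp (- (m * th * t))) x (- (m * th) * exp (- (m * th * x))).
Proof.
  eapply D_full. apply (D_expl (- (m*th)) x). intros t.
  replace (- (m * th * t)) with (- (m * th) * t) by ring; reflexivity.
  replace (- (m * th * x)) with (- (m * th) * x) by ring; reflexivity.
Qed.

Lemma Phi_der x : derivable_pt_lim (fun t => exp (- (m * th * t)) * wbar t) x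
  (exp (- (m * th * x)) * (dwbar x - m * th * wbar x)).
Proof.
  eapply D_full. apply (D_mul _ _ x _ _ (em_der x) (Hw1 x)). intros; reflexivity. ring.
Qed.

Lemma dPhi_der x : derivable_pt_lim (fun t => exp (- (m * th * t)) * (dwbar t - m * th * wbar t)) x
  (exp (- (m * th * x)) * ((- alpha N p * dwbar x + wbar x - rpow (wbar x) p)
     - 2 * m * th * dwbar x + (m * th) * (m * th) * wbar x)).
Proof.
  pose proof (D_minus _ (fun t => m * th * wbar t) x _ _ (Hw2 x)
     (D_mul (fun _ => m * th) wbar x _ _ (D_const _ x) (Hw1 x))).
  eapply D_full. apply (D_mul _ _ x _ _ (em_der x) H). intros; reflexivity. simpl. ring.
Qed.

Lemma Phi_ode x : 0 < wbar x ->
  exp (- (m * th * x)) * ((- alpha N p * dwbar x + wbar x - rpow (wbar x) p)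
     - 2 * m * th * dwbar x + (m * th) * (m * th) * wbar x)
  + be * (exp (- (m * th * x)) * (dwbar x - m * th * wbar x))
  = - (exp (2 * m * x) * Rpower (exp (- (m * th * x)) * wbar x) p).
Proof.
  intros Hw. pose proof (alpha_id N p HN Hp) as AI. simpl in AI. fold m th in AI.
  pose proof (th_p N p HN Hp) as Hth. fold th in Hth.
  unfold rpow. destruct (Rlt_dec 0 (wbar x)) as [_|h]; [|lra].
  rewrite <- Rpower_mult_distr by (auto; apply exp_pos).
  assert (RE : Rpower (exp (- (m * th * x))) p = exp (p * - (m * th * x))).
  { unfold Rpower. rewrite ln_exp. reflexivity. }
  rewrite RE.
  assert (E : exp (2 * m * x) * exp (p * - (m * th * x)) = exp (- (m * th * x))).
  { rewrite <- exp_plus. f_equal.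
    replace (2 * m * x) with ((p-1) * th * m * x) by (rewrite Hth; ring). ring. }
  assert (Hbe : be = 2 * m * th + alpha N p).
  { unfold be, alpha. fold m. unfold th. unfold theta. fold th.
    destruct (p_gt N p HN Hp). ring. }
  replace (exp (2 * m * x) * (exp (p * - (m * th * x)) * Rpower (wbar x) p))
    with ((exp (2 * m * x) * exp (p * - (m * th * x))) * Rpower (wbar x) p) by ring.
  rewrite E, Hbe.
  assert (mt : 0 < m * th).
  { pose proof (m_pos N p HN Hp). pose proof (th_pos N p HN Hp). unfold m, th. nra. }
  assert (Ha : alpha N p = (1 - m * th * (m * th)) / (m * th)).
  { apply (Rmult_eq_reg_r (m*th)); [|lra]. unfold Rdiv. rewrite Rmult_assoc, Rinv_l by lra. lra. }
  rewrite Ha. pose proof (m_pos N p HN Hp). pose proof (th_pos N p HN Hp). fold m th in H, H0. field. split; lra.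
Qed.

End Psec.


Theorem lemma5p2 (N : nat) (p : R) (u du : R -> R -> R)
  (wbar dwbar : R -> R) :
  (3 <= N)%nat ->
  pS N < p ->
  (forall gamma, 0 < gamma -> is_radial_solution N p gamma (u gamma) (du gamma)) ->
  (forall xi, derivable_pt_lim wbar xi (dwbar xi)) ->
  (forall xi, derivable_pt_lim dwbar xi
                (- alpha N p * dwbar xi + wbar xi - rpow (wbar xi) p)) ->
  (forall xi, 0 < wbar xi) ->
  (forall eps, 0 < eps -> exists M, forall xi, xi < M ->
     Rabs (exp (- (mcst N p * theta p * xi)) * wbar xi - 1) < eps) ->
  forall xibar eps, 0 < eps ->
  exists G, 0 < G /\ forall gamma xi, G < gamma -> xi <= xibar ->
    Rabs (wfun N p u xi gamma - wbar xi) < eps /\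
    (forall d, derivable_pt_lim (fun x => wfun N p u x gamma) xi d ->
       Rabs (d - dwbar xi) < eps).
Proof.
  intros HN Hp Hsol Hw1 Hw2 Hwpos Hlim b eps Heps.
  pose proof (m_pos N p HN Hp) as Hm. pose proof (th_pos N p HN Hp) as Hth.
  pose proof (mth_pos N p HN Hp) as Hmth. pose proof (INR_N3 N HN) as HN3.
  pose proof (p_gt N p HN Hp) as [Hp1 _].
  set (m := mcst N p) in *. set (th := theta p) in *.
  set (be := m * (INR N - 2)).
  assert (Hbe : 0 < be) by (unfold be; nra).
  set (Phi := fun x => exp (- (m * th * x)) * wbar x).
  set (dPhi := fun x => exp (- (m * th * x)) * (dwbar x - m * th * wbar x)).
  set (ddPhi := fun x => exp (- (m * th * x)) * ((- alpha N p * dwbar x + wbar x - rpow (wbar x) p)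
     - 2 * m * th * dwbar x + (m * th) * (m * th) * wbar x)).
  assert (HPd : forall x, derivable_pt_lim Phi x (dPhi x)) by (intros; apply Phi_der; auto).
  assert (HdPd : forall x, derivable_pt_lim dPhi x (ddPhi x)) by (intros; apply dPhi_der; auto).
  assert (HPode : forall x, ddPhi x + be * dPhi x = - (exp (2 * m * x) * Rpower (Phi x) p))
    by (intros; apply Phi_ode; auto).
  assert (HPpos : forall x, 0 < Phi x) by (intros; unfold Phi; pose proof (exp_pos (- (m * th * x))); pose proof (Hwpos x); nra).
  destruct (Hlim (1/2)) as [M1 HM1]; [lra|]. fold m th in HM1.
  assert (HM1' : forall x, x < M1 -> 1/2 <= Phi x <= 3/2).
  { intros x Hx. specialize (HM1 x Hx). fold (Phi x) in HM1. apply Rabs_def2 in HM1. lra. }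
  assert (HPc : forall x, continuity_pt Phi x).
  { intros x. apply derivable_continuous_pt. exists (dPhi x). apply HPd. }
  set (a0 := M1 - 1). set (b' := Rmax a0 b).
  assert (Hab : a0 <= b') by apply Rmax_l.
  destruct (continuity_ab_min Phi a0 b' Hab (fun c _ => HPc c)) as [xmin [Hmin _]].
  destruct (continuity_ab_maj Phi a0 b' Hab (fun c _ => HPc c)) as [xmax [Hmax _]].
  set (c := Rmin (1/2) (Phi xmin)). set (Bp := Rmax (3/2) (Phi xmax)).
  assert (Hc : 0 < c) by (apply Rmin_glb_lt; [lra| apply HPpos]).
  assert (HPb : forall x, x <= b -> c <= Phi x <= Bp).
  { intros x Hx. destruct (Rlt_dec x M1) as [h|h].
    - specialize (HM1' x h). split.
      + pose proof (Rmin_l (1/2) (Phi xmin)). fold c in H. lra.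
      + pose proof (Rmax_l (3/2) (Phi xmax)). fold Bp in H. lra.
    - assert (a0 <= x <= b') by (split; [unfold a0; lra| pose proof (Rmax_r a0 b); fold b' in H; lra]).
      split.
      + pose proof (Rmin_r (1/2) (Phi xmin)). fold c in H0. pose proof (Hmin x H). lra.
      + pose proof (Rmax_r (3/2) (Phi xmax)). fold Bp in H0. pose proof (Hmax x H). lra. }
  assert (HcB : c <= Bp) by (destruct (HPb (Rmin b 0) (Rmin_l b 0)); lra).
  set (B := Rpower (3/2) p).
  assert (HB : 0 <= B) by (left; unfold B, Rpower; apply exp_pos).
  assert (Hdec := decay Phi dPhi ddPhi be (2*m) B (M1 - 1) (3/2) M1 Hbe ltac:(lra) HB HPd HdPd).
  assert (Hdec2 : forall b0, b0 <= M1 - 1 -> b0 < M1 -> Rabs (dPhi b0) <= 2 * (B / (be + 2 * m)) * exp (2 * m * b0)).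
  { apply Hdec.
    - intros x Hx. rewrite HPode, Rabs_Ropp. rewrite Rabs_mult, Rabs_right by (left; apply exp_pos).
      rewrite Rabs_right by (left; unfold Rpower; apply exp_pos).
      rewrite Rmult_comm. apply Rmult_le_compat_r. left; apply exp_pos.
      unfold B. apply Rle_Rpower_l. lra. pose proof (HM1' x ltac:(lra)). pose proof (HPpos x). lra.
    - intros x Hx. pose proof (HM1' x Hx). rewrite Rabs_right; lra. }
  clear Hdec.
  assert (HdPlim : lim0 (fun x => exp (- m * x) * dPhi x)).
  { intros e He. set (C2 := 2 * (B / (be + 2 * m))).
    assert (HC2 : 0 <= C2) by (unfold C2; apply Rmult_le_pos; [lra| apply Rdiv_le_0_compat; lra]).
    exists (Rmin (M1 - 1) (ln (e / (C2 + 1)) / m)). intros x Hx.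
    pose proof (Rmin_l (M1 - 1) (ln (e / (C2 + 1)) / m)). pose proof (Rmin_r (M1 - 1) (ln (e / (C2 + 1)) / m)).
    specialize (Hdec2 x ltac:(lra) ltac:(lra)). fold C2 in Hdec2.
    assert (Hex : exp (m * x) < e / (C2 + 1)).
    { rewrite <- (exp_ln (e / (C2 + 1))) by (apply Rdiv_lt_0_compat; lra).
      apply exp_increasing. assert (x < ln (e / (C2 + 1)) / m) by lra.
      apply (Rmult_lt_compat_l m) in H1; auto. unfold Rdiv in H1.
      rewrite (Rmult_comm (ln _)), <- Rmult_assoc, Rinv_r, Rmult_1_l in H1 by lra. lra. }
    rewrite Rabs_mult, Rabs_right by (left; apply exp_pos).
    assert (E1 : exp (- m * x) * exp (2 * m * x) = exp (m * x)).
    { rewrite <- exp_plus. f_equal. ring. }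
    assert (exp (- m * x) * Rabs (dPhi x) <= exp (- m * x) * (C2 * exp (2 * m * x))).
    { apply Rmult_le_compat_l; [left; apply exp_pos| auto]. }
    assert (C2 * exp (m * x) <= C2 * (e / (C2 + 1))) by (apply Rmult_le_compat_l; lra).
    assert (C2 * (e / (C2 + 1)) < e).
    { apply (Rmult_lt_reg_r (C2 + 1)); [lra|]. unfold Rdiv.
      rewrite Rmult_assoc, (Rmult_assoc e), Rinv_l, Rmult_1_r by lra. nra. }
    replace (exp (- m * x) * (C2 * exp (2 * m * x))) with (C2 * (exp (- m * x) * exp (2 * m * x))) in H1 by ring.
    rewrite E1 in H1. lra. }
  set (hi := Bp + c/2). set (L := p * Rpower hi (p-1)).
  assert (HL : 0 <= L) by (unfold L; apply Rmult_le_pos; [lra| left; unfold Rpower; apply exp_pos]).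
  set (K := 2 + L). set (del := c/2). set (Bz := Bp + c/2).
  assert (HK : 0 < K) by (unfold K; lra).
  set (eb := exp (m * th * b) * (1 + m * th + exp (m * b))).
  assert (Heb : 0 < eb) by (unfold eb; pose proof (exp_pos (m*th*b)); pose proof (exp_pos (m*b)); nra).
  set (eta := eps / eb).
  assert (Heta : 0 < eta) by (unfold eta; apply Rdiv_lt_0_compat; lra).
  set (eta' := Rmin del eta).
  assert (Heta' : 0 < eta') by (unfold eta', del; apply Rmin_glb_lt; lra).
  set (T := exp (K / m * exp (m * b)) / K).
  assert (HT : 0 < T) by (unfold T; apply Rdiv_lt_0_compat; [apply exp_pos|lra]).
  set (e0 := eta' / ((1 + T) * (Bz + 1))).
  assert (He0 : 0 < e0) by (unfold e0; apply Rdiv_lt_0_compat; [lra|]; unfold Bz; nra).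
  set (k0 := Rmin (1/2) (e0 / (m * m))).
  assert (Hk0 : 0 < k0) by (unfold k0; apply Rmin_glb_lt; [lra| apply Rdiv_lt_0_compat; nra]).
  exists (exp (ln (Acst N p) - th * ln k0)). split; [apply exp_pos|].
  intros g xi HG Hxi.
  assert (Hg : 0 < g) by (pose proof (exp_pos (ln (Acst N p) - th * ln k0)); lra).
  pose proof (Hsol g Hg) as Hsg.
  set (k := kap N p g).
  assert (Hk : 0 < k) by (unfold k, kap; apply exp_pos).
  assert (Hkk : k < k0).
  { unfold k, kap, taufun. fold m th.
    rewrite <- (exp_ln k0 Hk0). apply exp_increasing.
    assert (ln (exp (ln (Acst N p) - th * ln k0)) < ln g) by (apply ln_increasing; auto; apply exp_pos).
    rewrite ln_exp in H.
    replace (- (m * ((ln g - ln (Acst N p)) / (m * th)))) with (- (ln g - ln (Acst N p)) / th) by (field; lra).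
    apply (Rmult_lt_reg_r th); auto. unfold Rdiv. rewrite Rmult_assoc, Rinv_l, Rmult_1_r by lra. nra. }
  set (ep := m * m * (k * k)).
  assert (Hep0 : 0 <= ep) by (unfold ep; nra).
  assert (Hep : ep < e0).
  { assert (k0 <= e0 / (m*m)) by apply Rmin_r. assert (k0 <= 1/2) by apply Rmin_l.
    assert (k * k < e0 / (m * m)) by nra.
    unfold ep. apply (Rmult_lt_compat_l (m*m)) in H1; [|nra].
    replace (m * m * (e0 / (m * m))) with e0 in H1 by (field; lra). lra. }
  set (z := fun x => u g (k * exp (m * x)) / g).
  set (dz := fun x => m * k * exp (m * x) * du g (k * exp (m * x)) / g).
  set (ddz := fun x => - be * dz x - m * m * (k * exp (m * x)) * (k * exp (m * x)) * Defs.f p (u g (k * exp (m * x))) / g).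
  assert (Hzd : forall x, derivable_pt_lim z x (dz x)) by (intros; exact (z_der N p g (u g) (du g) Hg Hsg x)).
  assert (Hdzd : forall x, derivable_pt_lim dz x (ddz x)) by (intros; exact (dz_der N p g (u g) (du g) Hg Hsg x)).
  set (E := fun x => z x - Phi x).
  set (Y := fun x => dz x - dPhi x).
  set (X := fun x => exp (- m * x) * Y x).
  set (V := fun x => E x * E x + X x * X x).
  set (dV := fun x => 2 * E x * Y x + 2 * X x * (- m * exp (- m * x) * Y x + exp (- m * x) * (ddz x - ddPhi x))).
  assert (HVd : forall x, derivable_pt_lim V x (dV x)).
  { intros x. assert (HE : derivable_pt_lim E x (Y x)) by (apply D_minus; auto).
    assert (HX : derivable_pt_lim X x (- m * exp (- m * x) * Y x + exp (- m * x) * (ddz x - ddPhi x))).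
    { eapply D_full. apply (D_mul _ Y x _ _ (D_expl (- m) x) (D_minus dz dPhi x _ _ (Hdzd x) (HdPd x))).
      intros; reflexivity. reflexivity. }
    eapply D_full. apply (D_plus _ _ x _ _ (D_mul E E x _ _ HE HE) (D_mul X X x _ _ HX HX)).
    intros; reflexivity. unfold dV. ring. }
  set (C := (ep * Bz) * (ep * Bz)).
  assert (Hbound : C / K * exp (K / m * exp (m * b)) < eta' * eta').
  { assert (Hy0 : 0 <= ep * Bz) by (unfold Bz; nra).
    set (w := eta' / (1 + T)).
    assert (Hy : ep * Bz < w).
    { assert (ep * Bz <= e0 * Bz) by (apply Rmult_le_compat_r; unfold Bz; lra).
      assert (e0 * Bz < e0 * (Bz + 1)) by (apply Rmult_lt_compat_l; lra).
      assert (e0 * (Bz + 1) = w) by (unfold e0, w; field; unfold Bz; lra). lra. }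
    assert (HyT : (ep * Bz) * (ep * Bz) < w * w) by (apply Rmult_le_0_lt_compat; lra).
    replace (C / K * exp (K / m * exp (m * b))) with (C * T) by (unfold T; field; lra).
    unfold C. 
    assert ((ep * Bz) * (ep * Bz) * T <= (ep * Bz) * (ep * Bz) * (1 + T)) by (apply Rmult_le_compat_l; nra).
    assert ((ep * Bz) * (ep * Bz) * (1 + T) < w * w * (1 + T)) by (apply Rmult_lt_compat_r; lra).
    assert (w * w * (1 + T) <= eta' * eta').
    { unfold w. replace (eta' / (1 + T) * (eta' / (1 + T)) * (1 + T)) with ((eta' * eta') / (1 + T)) by (field; lra).
      apply (Rmult_le_reg_r (1 + T)); [lra|]. unfold Rdiv. rewrite Rmult_assoc, Rinv_l by lra. nra. }
    lra. }
  assert (Heta'1 : eta' <= del) by apply Rmin_l. assert (Heta'2 : eta' <= eta) by apply Rmin_r.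
  assert (Hsmall : forall d1, 0 < d1 -> exists M, forall x, x < M -> 0 < k * exp (m * x) < d1).
  { intros d1 Hd1. exists (ln (d1 / k) / m). intros x Hx. split. pose proof (exp_pos (m*x)); nra.
    assert (exp (m * x) < d1 / k).
    { rewrite <- (exp_ln (d1 / k)) by (apply Rdiv_lt_0_compat; lra). apply exp_increasing.
      apply (Rmult_lt_compat_l m) in Hx; auto. replace (m * (ln (d1 / k) / m)) with (ln (d1 / k)) in Hx by (field; lra). lra. }
    apply (Rmult_lt_compat_l k) in H; auto. replace (k * (d1 / k)) with d1 in H by (field; lra). lra. }
  destruct Hsg as [_ [_ [_ [Hl1 Hl2]]]].
  assert (Hz1 : lim0 (fun x => z x - 1)).
  { intros e He. destruct (Hl1 (e * g)) as [d1 [Hd1 Hd1']]; [nra|].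
    destruct (Hsmall d1 Hd1) as [M HM]. exists M. intros x Hx. specialize (HM x Hx).
    specialize (Hd1' _ HM). unfold z. replace (u g (k * exp (m * x)) / g - 1) with ((u g (k * exp (m * x)) - g) / g) by (field; lra).
    unfold Rdiv. rewrite Rabs_mult, (Rabs_right (/ g)) by (left; apply Rinv_0_lt_compat; lra).
    apply (Rmult_lt_reg_r g); auto. rewrite Rmult_assoc, Rinv_l, Rmult_1_r by lra. lra. }
  assert (HP1 : lim0 (fun x => Phi x - 1)).
  { intros e He. destruct (Hlim e He) as [M HM]. exists M. intros x Hx. apply (HM x Hx). }
  assert (Hdz0 : lim0 (fun x => exp (- m * x) * dz x)).
  { intros e He. destruct (Hl2 (e * g / (m * k))) as [d1 [Hd1 Hd1']].
    { apply Rdiv_lt_0_compat; nra. }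
    destruct (Hsmall d1 Hd1) as [M HM]. exists M. intros x Hx. specialize (HM x Hx).
    specialize (Hd1' _ HM). unfold dz.
    replace (exp (- m * x) * (m * k * exp (m * x) * du g (k * exp (m * x)) / g))
      with ((m * k / g) * du g (k * exp (m * x))).
    2: { replace (- m * x) with (- (m * x)) by ring. rewrite exp_Ropp. field. split. lra. pose proof (exp_pos (m*x)); lra. }
    rewrite Rabs_mult, (Rabs_right (m * k / g)) by (left; apply Rdiv_lt_0_compat; nra).
    apply (Rmult_lt_compat_l (m * k / g)) in Hd1'; [|apply Rdiv_lt_0_compat; nra].
    replace (m * k / g * (e * g / (m * k))) with e in Hd1' by (field; repeat split; lra). lra. }
  assert (HVlim : forall e, 0 < e -> exists M, forall x, x < M -> Rabs (V x) < e).
  { apply lim0_sq.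
    - eapply lim0_ext; [| apply (lim0_minus _ _ Hz1 HP1)]. intros x; unfold E; simpl; ring.
    - eapply lim0_ext; [| apply (lim0_minus _ _ Hdz0 HdPlim)]. intros x; unfold X, Y; simpl; ring. }
  assert (Hd : forall x, x <= b -> V x < del * del -> dV x <= exp (m * x) * (K * V x + C)).
  { intros x Hx HVx.
    assert (HE0 : Rabs (E x) < del).
    { destruct (Rlt_dec (Rabs (E x)) del) as [h|h]; auto. exfalso.
      assert (del * del <= Rabs (E x) * Rabs (E x)) by (assert (0 <= del) by (unfold del; lra); apply Rmult_le_compat; lra).
      rewrite <- Rabs_mult, Rabs_right in H by (apply Rle_ge, Rle_0_sqr).
      pose proof (Rle_0_sqr (X x)). unfold V, Rsqr in *. lra. }
    pose proof (Rabs_def2 _ _ HE0) as [HE1 HE2].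
    destruct (HPb x Hx) as [Pc PB].
    assert (Hz : c/2 <= z x <= hi) by (unfold E, del, hi in *; lra).
    assert (Hu : 0 < u g (k * exp (m * x))).
    { assert (0 < z x) by lra. unfold z in H. replace (u g (k * exp (m * x))) with (u g (k * exp (m * x)) / g * g) by (field; lra).
      nra. }
    pose proof (ddz_pos N p HN Hp g (u g) Hg x Hu) as Hdd. fold m k in Hdd. fold (z x) in Hdd. fold ep in Hdd.
    pose proof (HPode x) as HPo.
    set (Dg := Rpower (z x) p - Rpower (Phi x) p - ep * z x).
    assert (HDg : Rabs Dg <= L * Rabs (E x) + ep * Bz).
    { assert (H1 : Rabs (Rpower (z x) p - Rpower (Phi x) p) <= L * Rabs (E x)).
      { unfold L, E. apply (rpow_lip (c/2)); unfold hi in *; lra. }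
      assert (H2 : Rabs (ep * z x) <= ep * Bz).
      { rewrite Rabs_mult, Rabs_right, Rabs_right by lra. apply Rmult_le_compat_l; unfold Bz, hi in *; lra. }
      unfold Dg. pose proof (Rabs_triang (Rpower (z x) p - Rpower (Phi x) p) (- (ep * z x))).
      rewrite Rabs_Ropp in H. replace (Rpower (z x) p - Rpower (Phi x) p - ep * z x) with ((Rpower (z x) p - Rpower (Phi x) p) + - (ep * z x)) by ring. lra. }
    assert (Hid : dV x = 2 * exp (m * x) * E x * X x - 2 * (m + be) * X x * X x - 2 * exp (m * x) * X x * Dg).
    { assert (Hdiff : ddz x - ddPhi x = - be * Y x - exp (2 * m * x) * Dg).
      { unfold ddz. rewrite Hdd. unfold Y, Dg.
        replace (ddPhi x) with (- be * dPhi x - exp (2 * m * x) * Rpower (Phi x) p) by lra. ring. }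
      unfold dV. rewrite Hdiff. unfold X.
      replace (- m * x) with (- (m * x)) by ring. rewrite exp_Ropp.
      replace (2 * m * x) with (m * x + m * x) by ring. rewrite exp_plus.
      pose proof (exp_pos (m * x)). field. lra. }
    rewrite Hid.
    pose proof (alg_ineq (E x) (X x) (exp (m * x)) L Dg (ep * Bz) (m + be) (exp_pos _) HL ltac:(lra)
      ltac:(unfold Bz; nra) HDg).
    unfold V, C, K. lra. }
  assert (HVb := boot V dV m K C (del * del) b Hm HK ltac:(unfold C; nra) HVd Hd HVlim ltac:(nra)).
  specialize (HVb xi Hxi).
  assert (HEX : Rabs (E xi) < eta' /\ Rabs (X xi) < eta').
  { assert (V xi < eta' * eta') by lra. unfold V in H.
    pose proof (Rle_0_sqr (E xi)). pose proof (Rle_0_sqr (X xi)). unfold Rsqr in *.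
    split.
    - destruct (Rlt_dec (Rabs (E xi)) eta') as [h|h]; auto; exfalso.
      assert (eta' * eta' <= Rabs (E xi) * Rabs (E xi)) by (apply Rmult_le_compat; lra).
      rewrite <- Rabs_mult, Rabs_right in H2 by lra. lra.
    - destruct (Rlt_dec (Rabs (X xi)) eta') as [h|h]; auto; exfalso.
      assert (eta' * eta' <= Rabs (X xi) * Rabs (X xi)) by (apply Rmult_le_compat; lra).
      rewrite <- Rabs_mult, Rabs_right in H2 by lra. lra. }
  destruct HEX as [HEx HXx].
  assert (Hwf : forall x, wfun N p u x g = exp (m * th * x) * z x).
  { intros x. exact (wfun_eq N p HN Hp g (u g) Hg u x eq_refl). }
  assert (Hinv : forall x, exp (m * th * x) * exp (- (m * th * x)) = 1).
  { intros x. rewrite <- exp_plus. replace (m * th * x + - (m * th * x)) with 0 by ring. apply exp_0. }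
  assert (Hwb : wbar xi = exp (m * th * xi) * Phi xi).
  { unfold Phi. rewrite <- Rmult_assoc, Hinv. ring. }
  assert (Hdwb : dwbar xi = exp (m * th * xi) * (dPhi xi + m * th * Phi xi)).
  { unfold dPhi, Phi. replace (exp (m * th * xi) * (exp (- (m * th * xi)) * (dwbar xi - m * th * wbar xi) +
      m * th * (exp (- (m * th * xi)) * wbar xi))) with
      ((exp (m * th * xi) * exp (- (m * th * xi))) * dwbar xi) by ring. rewrite Hinv. ring. }
  assert (Hemb : exp (m * th * xi) <= exp (m * th * b)) by (apply exp_le_mono; nra).
  assert (Hemb2 : exp (m * xi) <= exp (m * b)) by (apply exp_le_mono; nra).
  assert (Heq : exp (m * th * b) * ((1 + m * th + exp (m * b)) * eta) = eps).
  { unfold eta, eb. field. split; pose proof (exp_pos (m*th*b)); pose proof (exp_pos (m*b)); nra. }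
  pose proof (exp_pos (m * th * xi)). pose proof (exp_pos (m * xi)).
  pose proof (exp_pos (m * th * b)). pose proof (exp_pos (m * b)).
  split.
  - rewrite Hwf, Hwb. replace (exp (m * th * xi) * z xi - exp (m * th * xi) * Phi xi) with
      (exp (m * th * xi) * E xi) by (unfold E; ring).
    rewrite Rabs_mult, Rabs_right by lra.
    assert (exp (m * th * xi) * Rabs (E xi) <= exp (m * th * b) * eta).
    { apply Rmult_le_compat; try lra. apply Rabs_pos. }
    assert (exp (m * th * b) * eta < exp (m * th * b) * ((1 + m * th + exp (m * b)) * eta)).
    { apply Rmult_lt_compat_l; auto. nra. }
    lra.
  - intros d Hder.
    assert (Hder2 : derivable_pt_lim (fun x => exp (m * th * x) * z x) xi
       (m * th * exp (m * th * xi) * z xi + exp (m * th * xi) * dz xi)).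
    { apply (D_mul _ _ xi _ _ (D_expl (m * th) xi) (Hzd xi)). }
    assert (Hfe : (fun x => wfun N p u x g) = (fun x => exp (m * th * x) * z x)).
    { apply functional_extensionality. exact Hwf. }
    rewrite Hfe in Hder. pose proof (uniqueness_limite _ _ _ _ Hder Hder2) as Hdeq.
    rewrite Hdeq, Hdwb.
    assert (HY : Y xi = exp (m * xi) * X xi).
    { unfold X. rewrite <- Rmult_assoc, <- exp_plus. replace (m * xi + - m * xi) with 0 by ring.
      rewrite exp_0. ring. }
    replace (m * th * exp (m * th * xi) * z xi + exp (m * th * xi) * dz xi -
       exp (m * th * xi) * (dPhi xi + m * th * Phi xi))
      with (exp (m * th * xi) * (m * th * E xi + exp (m * xi) * X xi)) by (unfold E; rewrite <- HY; unfold Y; ring).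
    rewrite Rabs_mult, Rabs_right by lra.
    assert (Rabs (m * th * E xi + exp (m * xi) * X xi) <= (m * th + exp (m * b)) * eta).
    { pose proof (Rabs_triang (m * th * E xi) (exp (m * xi) * X xi)).
      rewrite !Rabs_mult, (Rabs_right m), (Rabs_right th), (Rabs_right (exp (m * xi))) in H3 by lra.
      assert (m * th * Rabs (E xi) <= m * th * eta) by (apply Rmult_le_compat_l; lra).
      assert (exp (m * xi) * Rabs (X xi) <= exp (m * b) * eta) by (apply Rmult_le_compat; try lra; apply Rabs_pos).
      lra. }
    assert (exp (m * th * xi) * Rabs (m * th * E xi + exp (m * xi) * X xi) <= exp (m * th * b) * ((m * th + exp (m * b)) * eta)).
    { apply Rmult_le_compat; try lra. apply Rabs_pos. }
    assert (exp (m * th * b) * ((m * th + exp (m * b)) * eta) < exp (m * th * b) * ((1 + m * th + exp (m * b)) * eta)).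
    { apply Rmult_lt_compat_l; auto. nra. }
    lra.
Qed.
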